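(* Let $\mathcal{T}$ be a tiling of $\mathbb{R}^d$ with finite local complexity, and let $f:X_{\mathcal{T}}\to\mathbb{T}$ be a continuous eigenfunction. Then for every $\varepsilon>0$ there is $R>0$ such that whenever $\mathcal{S}_1,\mathcal{S}_2\in X_{\mathcal{T}}$, $x\in\mathbb{R}^d$ and $\mathcal{S}_1\wedge B(x,R)=\mathcal{S}_2\wedge B(x,R)$, we have $|f(\mathcal{S}_1)-f(\mathcal{S}_2)|<\varepsilon$. Consequently, given $f$ and $\varepsilon>0$, if $R>0$ is large enough and a patch $\mathcal{P}$ has support containing a ball of radius $R$, then the diameter of $f(A_{\mathcal{P}})$ is less than $\varepsilon$, where $A_{\mathcal{P}}=\{\mathcal{S}\in X_{\mathcal{T}}:\mathcal{P}\subset\mathcal{S}\}$.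
   Context: A tile in $\mathbb{R}^d$ is a compact set equal to the closure of its interior, possibly labeled from a finite set. Patches: sets of tiles with pairwise disjoint interiors; tilings: patches whose support (closure of union of supports) is $\mathbb{R}^d$. For a patch $\mathcal{P}$ and $S\subset\mathbb{R}^d$: $\mathcal{P}\sqcap S=\{T\in\mathcal{P}:\operatorname{supp}T\cap S\neq\emptyset\}$ and $\mathcal{P}\wedge S=\{T\in\mathcal{P}:\operatorname{supp}T\subset S\}$. $B(x,R)$ is the closed ball; $B_r=B(0,r)$; $\mathbb{T}=\{z\in\mathbb{C}:|z|=1\}$. Finite local complexity: for each compact $K$, $\{\mathcal{T}\sqcap(K+x)\}_x$ is finite up to translation. The hull $X_{\mathcal{T}}$ is the closure of $\{\mathcal{T}+x\}$ under the metric $\rho(\mathcal{P}_1,\mathcal{P}_2)=\inf$ of $\varepsilon\in(0,1/\sqrt2)$ such that there are $\|x_i\|\le\varepsilon$ with $(\mathcal{P}_1+x_1)\sqcap B_{1/\varepsilon}=(\mathcal{P}_2+x_2)\sqcap B_{1/\varepsilon}$ (or $1/\sqrt2$ if none). A continuous eigenfunction (with eigenvalue $a\in\mathbb{R}^d$) is a continuous map $f:X_{\mathcal{T}}\to\mathbb{T}$ with $f(\mathcal{S}-x)=e^{2\pi i\langle x,a\rangle}f(\mathcal{S})$ for all $\mathcal{S}\in X_{\mathcal{T}}$ and $x\in\mathbb{R}^d$. *)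

(* Defs.v *)
(* R : realType, points of R^d are row vectors 'rV[R]_d
   (with the product topology, which is the Euclidean topology), the circle group
   lives in the complex numbers R[i] of mathcomp-real-closed. *)
From HB Require Import structures.
From mathcomp Require Import all_boot all_order all_algebra.
From mathcomp Require Import all_classical all_reals all_analysis.
From mathcomp Require Import complex.
Set Implicit Arguments.
Unset Strict Implicit.
Unset Printing Implicit Defensive.
Import Order.TTheory GRing.Theory Num.Theory.
Import numFieldTopology.Exports numFieldNormedType.Exports.
Local Open Scope ring_scope.
Local Open Scope classical_set_scope.
Local Open Scope complex_scope.

Section Tilings.
Context {R : realType} {d : nat} {L : finType}.

Definition enorm (x : 'rV[R]_d) : R := Num.sqrt (\sum_(i < d) (x ord0 i) ^+ 2).
Definition eball (x : 'rV[R]_d) (r : R) : set 'rV[R]_d :=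
  [set y | enorm (y - x) <= r].
Definition dotp (x a : 'rV[R]_d) : R := \sum_(i < d) x ord0 i * a ord0 i.

Definition set_tr (A : set 'rV[R]_d) (x : 'rV[R]_d) : set 'rV[R]_d :=
  [set y + x | y in A].

Definition Tile := (set 'rV[R]_d * L)%type.
Definition supp (t : Tile) : set 'rV[R]_d := t.1.
Definition is_tile (t : Tile) : Prop :=
  compact (supp t) /\ closure (interior (supp t)) = supp t.

Definition Patch := set Tile.
Definition is_patch (P : Patch) : Prop :=
  (forall t, P t -> is_tile t) /\
  (forall t1 t2, P t1 -> P t2 -> t1 <> t2 ->
     interior (supp t1) `&` interior (supp t2) = set0).
Definition patch_supp (P : Patch) : set 'rV[R]_d :=
  closure (\bigcup_(t in P) supp t).
Definition is_tiling (P : Patch) : Prop := is_patch P /\ patch_supp P = setT.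

Definition tile_tr (t : Tile) (x : 'rV[R]_d) : Tile := (set_tr (supp t) x, t.2).
Definition patch_tr (P : Patch) (x : 'rV[R]_d) : Patch := [set tile_tr t x | t in P].

(* P ⊓ S  and  P ∧ S *)
Definition meet_patch (P : Patch) (S : set 'rV[R]_d) : Patch :=
  [set t | P t /\ supp t `&` S !=set0].
Definition inside_patch (P : Patch) (S : set 'rV[R]_d) : Patch :=
  [set t | P t /\ supp t `<=` S].

Definition FLC (T : Patch) : Prop :=
  forall K : set 'rV[R]_d, compact K ->
    exists (n : nat) (Ps : 'I_n -> Patch),
      forall x : 'rV[R]_d, exists (i : 'I_n) (y : 'rV[R]_d),
        meet_patch T (set_tr K x) = patch_tr (Ps i) y.

Definition rho_set (P1 P2 : Patch) : set R :=
  [set e : R | (0 < e /\ e < (Num.sqrt 2)^-1) /\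
     exists x1 x2 : 'rV[R]_d, enorm x1 <= e /\ enorm x2 <= e /\
       meet_patch (patch_tr P1 x1) (eball 0 e^-1) =
       meet_patch (patch_tr P2 x2) (eball 0 e^-1)].
Definition rho (P1 P2 : Patch) : R :=
  if pselect (rho_set P1 P2 !=set0) then inf (rho_set P1 P2)
  else (Num.sqrt 2)^-1.

Definition hull (T : Patch) : set Patch :=
  [set S | forall e : R, 0 < e -> exists x : 'rV[R]_d, rho S (patch_tr T x) < e].

Definition A_patch (T P : Patch) : set Patch := [set S | hull T S /\ P `<=` S].

Definition expi (t : R) : R[i] := cos (2 * pi * t) +i* sin (2 * pi * t).

Definition continuous_on_hull (T : Patch) (f : Patch -> R[i]) : Prop :=
  forall S, hull T S -> forall e : R, 0 < e ->
    exists2 del : R, 0 < del &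
      forall S', hull T S' -> rho S S' < del -> `|f S - f S'| < e%:C.
Definition is_eigenfunction (T : Patch) (f : Patch -> R[i]) (a : 'rV[R]_d) : Prop :=
  [/\ continuous_on_hull T f,
      (forall S, hull T S -> `|f S| = 1) &
      (forall S (x : 'rV[R]_d), hull T S ->
         f (patch_tr S (- x)) = expi (dotp x a) * f S)].

End Tilings.

(* Main.v *)
Require Import Defs.
From HB Require Import structures.
From mathcomp Require Import all_boot all_order all_algebra.
From mathcomp Require Import all_classical all_reals all_analysis.
From mathcomp Require Import complex.
From mathcomp Require Import ring.
Import Order.TTheory GRing.Theory Num.Theory.
Import numFieldTopology.Exports numFieldNormedType.Exports.
Local Open Scope ring_scope.
Local Open Scope classical_set_scope.
Local Open Scope complex_scope.
Section Basics.
Context {R : realType} {d : nat} {L : finType}.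
Local Notation V := 'rV[R]_d.
Local Notation Tl := (@Tile R d L).
Local Notation Pt := (@Patch R d L).

Lemma set_trE (A : set V) z p : set_tr A z p <-> A (p - z).
Proof.
split; first by case=> y Ay <-; rewrite addrK.
by move=> Ap; exists (p - z) => //; rewrite subrK.
Qed.

Lemma set_tr0 (A : set V) : set_tr A 0 = A.
Proof. by apply/seteqP; split=> p; rewrite set_trE subr0. Qed.

Lemma set_trD (A : set V) a b : set_tr (set_tr A a) b = set_tr A (a + b).
Proof. by apply/seteqP; split=> p; rewrite !set_trE opprD addrA addrAC. Qed.

Lemma tile_tr0 (t : Tl) : tile_tr t 0 = t.
Proof. by case: t => A l; rewrite /tile_tr /= set_tr0. Qed.

Lemma tile_trD (t : Tl) a b : tile_tr (tile_tr t a) b = tile_tr t (a + b).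
Proof. by case: t => A l; rewrite /tile_tr /= set_trD. Qed.

Lemma patch_trE (P : Pt) z t : patch_tr P z t <-> P (tile_tr t (- z)).
Proof.
split; first by case=> s Ps <-; rewrite tile_trD subrr tile_tr0.
by move=> Pt; exists (tile_tr t (- z)) => //; rewrite tile_trD addNr tile_tr0.
Qed.

Lemma patch_tr0 (P : Pt) : patch_tr P 0 = P.
Proof. by apply/seteqP; split=> t; rewrite patch_trE oppr0 tile_tr0. Qed.

Lemma patch_trD (P : Pt) a b : patch_tr (patch_tr P a) b = patch_tr P (a + b).
Proof.
by apply/seteqP; split=> t; rewrite !patch_trE tile_trD opprD addrC.
Qed.

Lemma supp_tr (t : Tl) z : supp (tile_tr t z) = set_tr (supp t) z.
Proof. by []. Qed.

Lemma meet_tr (P : Pt) z (B : set V) :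
  meet_patch (patch_tr P z) B = patch_tr (meet_patch P (set_tr B (- z))) z.
Proof.
apply/seteqP; split=> t.
  case=> /patch_trE Pt [p [tp Bp]]; apply/patch_trE; split=> //.
  by exists (p - z); split; rewrite ?supp_tr set_trE opprK subrK.
move/patch_trE; rewrite /meet_patch /= => -[Pt [p []]].
rewrite /supp /= !set_trE opprK => tp Bp.
split; first exact/patch_trE.
by exists (p + z).
Qed.

Lemma meet_tr' (P : Pt) z (B : set V) :
  meet_patch (patch_tr P z) (set_tr B z) = patch_tr (meet_patch P B) z.
Proof. by rewrite meet_tr set_trD subrr set_tr0. Qed.

Lemma meet_sub (P : Pt) (B C : set V) : B `<=` C ->
  meet_patch (meet_patch P C) B = meet_patch P B.
Proof.
move=> BC; apply/seteqP; split=> t; first by case=> -[].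
case=> Pt [p [tp Bp]]; split; last by exists p.
by split=> //; exists p; split=> //; apply: BC.
Qed.

Lemma meet_eq_sub (P Q : Pt) (B C : set V) : B `<=` C ->
  meet_patch P C = meet_patch Q C -> meet_patch P B = meet_patch Q B.
Proof. by move=> BC E; rewrite -(@meet_sub P B C BC) -(@meet_sub Q B C BC) E. Qed.

Lemma meet_tr_eq (P Q : Pt) z (B : set V) :
  meet_patch P B = meet_patch Q B ->
  meet_patch (patch_tr P z) (set_tr B z) = meet_patch (patch_tr Q z) (set_tr B z).
Proof. by rewrite !meet_tr' => ->. Qed.

End Basics.
Section Topo.
Context {R : realType} {d : nat}.
Local Notation V := 'rV[R]_d.

Lemma ballE (x y : V) e :
  ball x e y <-> 0 < e /\ forall i, `|x ord0 i - y ord0 i| < e.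
Proof.
split; first by case=> e0 H; split=> // i; exact: (H ord0 i).
case=> e0 H; split=> // i j; rewrite (ord1 i); exact: H.
Qed.

Lemma nbhsE' (p : V) (A : set V) :
  nbhs p A <-> exists2 e : R, 0 < e & forall q : V,
     (forall i, `|p ord0 i - q ord0 i| < e) -> A q.
Proof.
split.
  case/nbhs_ballP=> e e0 H; exists e => // q Hq; apply: H; exact/ballE.
case=> e e0 H; apply/nbhs_ballP; exists e => // q /ballE [_ Hq]; exact: H.
Qed.

Lemma interior_tr (A : set V) z p :
  interior (set_tr A z) p <-> interior A (p - z).
Proof.
rewrite /interior /=; split => /nbhsE' [e e0 H]; apply/nbhsE'; exists e => // q Hq.
  have := H (q + z); rewrite set_trE addrK; apply=> i.
  by have := Hq i; rewrite !mxE opprD addrA addrAC.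
apply/set_trE; apply: H => i; have := Hq i.
by rewrite !mxE opprD addrA addrAC opprK subrK.
Qed.

Lemma interior_cube (A : set V) c : interior A c ->
  exists2 e : R, 0 < e & forall w : V, (forall i, `|w ord0 i| < e) -> A (c + w).
Proof.
rewrite /interior /= => /nbhsE' [e e0 H]; exists e => // w Hw; apply: H => i.
by rewrite mxE opprD addNKr normrN.
Qed.

Lemma closure_int (A B : set V) p : closure A p -> interior B p -> A `&` B !=set0.
Proof. by move=> cA iB; apply: cA. Qed.

End Topo.
Section Bounds.
Context {R : realType} {d : nat}.
Local Notation V := 'rV[R]_d.

Definition cube (k : R) : set V := [set v | forall i, `|v ord0 i| <= k].

Lemma cube_compact k : compact (cube k).
Proof.
have -> : cube k = [set v : V | forall i, `[(- k), k]%classic (v ord0 i)].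
  by apply/seteqP; split=> v /= H i; have := H i; rewrite /= in_itv /= ler_norml.
apply: (@rV_compact _  _ (fun=> `[(- k), k]%classic)).
by move=> _; apply: segment_compact.
Qed.

Lemma coord_le_norm (v : V) i : `|v ord0 i| <= `|v|.
Proof.
have /mapP[j Hj ->] : `|v ord0 i| \in [seq `|v x.1 x.2| | x : 'I_1 * 'I_d].
  by apply/mapP; exists (ord0, i) => //=; rewrite mem_enum.
by rewrite [leRHS]/Num.norm /= mx_normrE; apply/bigmax_geP; right => /=; exists j.
Qed.

Lemma compact_coord (A : set V) : compact A ->
  exists M : R, 0 <= M /\ forall p, A p -> forall i, `|p ord0 i| <= M.
Proof.
move=> /compact_bounded [M [Mreal HM]].
exists (`|M| + 1); split; first by rewrite addr_ge0.
move=> p Ap i; apply: le_trans (coord_le_norm p i) _.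
apply: HM => //; apply: le_lt_trans (real_ler_norm Mreal) _.
by rewrite ltrDl.
Qed.

Lemma enorm_ge0 (v : V) : 0 <= enorm v.
Proof. exact: sqrtr_ge0. Qed.

Lemma coord_le_enorm (v : V) i : `|v ord0 i| <= enorm v.
Proof.
rewrite /enorm -sqrtr_sqr; apply: ler_wsqrtr.
rewrite (bigD1 i) //= lerDl; apply: sumr_ge0 => j _; exact: sqr_ge0.
Qed.

Lemma enorm_le_coord (v : V) (c : R) : 0 <= c ->
  (forall i, `|v ord0 i| <= c) -> enorm v <= d%:R * c.
Proof.
move=> c0 H; rewrite /enorm -(ger0_norm (mulr_ge0 (ler0n _ d) c0)) -sqrtr_sqr.
apply: ler_wsqrtr; apply: le_trans (_ : \sum_(i < d) c ^+ 2 <= _).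
  apply: ler_sum => i _; rewrite -real_normK ?num_real //.
  by apply: lerXn2r; rewrite ?nnegrE // normr_ge0.
rewrite sumr_const card_ord exprMn -[_ *+ d]mulr_natl ler_wpM2r ?sqr_ge0 //.
rewrite -natrX ler_nat; case: (d) => [|n] //.
by rewrite expnS expn1 leq_pmulr.
Qed.

Lemma enormN (v : V) : enorm (- v) = enorm v.
Proof. by rewrite /enorm; congr Num.sqrt; apply: eq_bigr => i _; rewrite mxE sqrrN. Qed.

Lemma enorm0 : enorm (0 : V) = 0.
Proof. by rewrite /enorm big1 ?sqrtr0 // => i _; rewrite mxE expr0n. Qed.

End Bounds.
Section Tiling1.
Context {R : realType} {d : nat} {L : finType}.
Local Notation V := 'rV[R]_d.
Local Notation Tl := (@Tile R d L).
Local Notation Pt := (@Patch R d L).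

Lemma patch_trP (P : Pt) z t : patch_tr P z t -> exists2 s, P s & t = tile_tr s z.
Proof. by case=> s Ps <-; exists s. Qed.

Lemma tile_int (t : Tl) p : is_tile t -> supp t p -> exists c, interior (supp t) c.
Proof.
case=> _ ct sp; apply: contrapT => H.
have I0 : interior (supp t) = set0.
  by apply/seteqP; split=> // c ic; apply: H; exists c.
by move: sp; rewrite -ct I0 closure0.
Qed.

Lemma trT_int (T : Pt) z t p : is_patch T -> patch_tr T z t -> supp t p ->
  exists c, interior (supp t) c.
Proof.
move=> [tT _] /patch_trP [s Ts ->]; rewrite supp_tr set_trE => sp.
have [c ic] := @tile_int s (p - z) (tT _ Ts) sp.
by exists (c + z); apply/interior_tr; rewrite addrK.
Qed.

Lemma trT_disj (T : Pt) z t1 t2 : is_patch T -> patch_tr T z t1 -> patch_tr T z t2 ->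
  interior (supp t1) `&` interior (supp t2) !=set0 -> t1 = t2.
Proof.
move=> [_ dT] /patch_trP [s1 T1 ->] /patch_trP [s2 T2 ->] [c [i1 i2]].
move/interior_tr: i1 => i1; move/interior_tr: i2 => i2.
case: (pselect (s1 = s2)) => [-> //|ne].
have := dT _ _ T1 T2 ne; rewrite -subset0 => /(_ (c - z)) H.
by exfalso; apply: H; split.
Qed.

Lemma int_meet (A B : set V) p : closure (interior A) p -> interior B p ->
  interior A `&` interior B !=set0.
Proof.
move=> cA iB; apply: cA.
have : open (interior B) by exact: open_interior.
by rewrite openE => /(_ p iB).
Qed.

End Tiling1.
Section Rho.
Context {R : realType} {d : nat} {L : finType}.
Local Notation V := 'rV[R]_d.
Local Notation Tl := (@Tile R d L).
Local Notation Pt := (@Patch R d L).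

Lemma sqrt2_lt2 : Num.sqrt (2 : R) < 2.
Proof.
rewrite -{2}(ger0_norm (ler0n R 2)) -sqrtr_sqr ltr_sqrt ?exprn_gt0 //.
by rewrite expr2 ltr_pMl // ltr1n.
Qed.

Lemma half_lt_isqrt2 : (2 : R)^-1 < (Num.sqrt 2)^-1.
Proof.
have s0 : 0 < Num.sqrt (2 : R) by rewrite sqrtr_gt0.
by rewrite (@ltf_pV2 R 2 (Num.sqrt 2)) ?posrE // sqrt2_lt2.
Qed.

Lemma rho_le (P1 P2 : Pt) e x1 x2 : 0 < e -> e <= 2^-1 ->
  enorm x1 <= e -> enorm x2 <= e ->
  meet_patch (patch_tr P1 x1) (eball 0 e^-1) =
  meet_patch (patch_tr P2 x2) (eball 0 e^-1) ->
  rho P1 P2 <= e.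
Proof.
move=> e0 e2 h1 h2 h3.
have Se : rho_set P1 P2 e.
  split; first by split=> //; apply: le_lt_trans e2 half_lt_isqrt2.
  by exists x1, x2.
rewrite /rho; case: pselect => [ne|]; last by move=> H; exfalso; apply: H; exists e.
apply: ge_inf => //; exists 0 => y [[y0 _] _]; exact: ltW.
Qed.

Lemma rho_lt (P1 P2 : Pt) del : rho P1 P2 < del -> del <= (Num.sqrt 2)^-1 ->
  exists e x1 x2, [/\ 0 < e, e < del, enorm x1 <= e, enorm x2 <= e &
   meet_patch (patch_tr P1 x1) (eball 0 e^-1) =
   meet_patch (patch_tr P2 x2) (eball 0 e^-1)].
Proof.
move=> h h'; move: h; rewrite /rho; destruct (pselect _) as [ne|ne]; last first.
  by move=> h; have := lt_le_trans h h'; rewrite ltxx.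
move=> /(inf_lt ne) [e [[e0 _] [x1 [x2 [h1 [h2 h3]]]]] ed].
by exists e, x1, x2; split.
Qed.

End Rho.
Section Hull.
Context {R : realType} {d : nat} {L : finType}.
Local Notation V := 'rV[R]_d.
Local Notation Tl := (@Tile R d L).
Local Notation Pt := (@Patch R d L).

Lemma eball_coord (x : V) r (p : V) : eball x r p -> forall i, `|p ord0 i - x ord0 i| <= r.
Proof.
move=> H i; have := coord_le_enorm (p - x) i; rewrite !mxE => h.
exact: le_trans h H.
Qed.

Lemma coord_eball (x : V) r (p : V) (c : R) : 0 <= c -> d%:R * c <= r ->
  (forall i, `|p ord0 i - x ord0 i| <= c) -> eball x r p.
Proof.
move=> c0 cr H; rewrite /eball /=; apply: le_trans cr.
by apply: enorm_le_coord => // i; rewrite !mxE.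
Qed.

Lemma inv_le_of (a b : R) : 0 < a -> 0 < b -> a <= b^-1 -> b <= a^-1.
Proof.
move=> a0 b0 h; rewrite -(invrK b).
by rewrite (@lef_pV2 R b^-1 a) ?posrE ?invr_gt0.
Qed.

Lemma hull_approx (T : Pt) S : hull T S -> forall rr : R, 0 < rr ->
  exists z, meet_patch S (eball 0 rr) = meet_patch (patch_tr T z) (eball 0 rr).
Proof.
move=> hS rr rr0.
set X := ((d%:R + 1) * (rr + 1)).
have X0 : 0 < X.
  by apply: mulr_gt0; [exact: ltr_wpDl (ler0n _ _) ltr01 | exact: ltr_wpDl (ltW rr0) ltr01].
set del := Num.min (2^-1) X^-1.
have del0 : 0 < del by rewrite lt_min !invr_gt0 X0 andbT.
have [y hy] := hS del del0.
have dsq : del <= (Num.sqrt 2)^-1.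
  by apply: le_trans (ltW half_lt_isqrt2); rewrite ge_min lexx.
have [e [x1 [x2 [e0 ed h1 h2 h3]]]] := rho_lt _ _ _ hy dsq.
exists (y + (x2 - x1)).
have E := meet_tr_eq _ _ (- x1) _ h3; rewrite !patch_trD addrN patch_tr0 in E.
apply: (meet_eq_sub _ _ _ _ _ E) => p Hp; apply/set_trE; rewrite opprK.
have del2 : del <= 2^-1 by rewrite ge_min lexx.
have e1 : e <= 1.
  apply: le_trans (ltW ed) (le_trans del2 _).
  by rewrite invf_le1 // ler1n.
apply: (@coord_eball _ _ _ (rr + 1)).
- by rewrite addr_ge0 // ltW.
- apply: le_trans (_ : X <= _).
    by apply: ler_wpM2r; [rewrite addr_ge0 // ltW | rewrite lerDl].
  apply: inv_le_of => //; apply: le_trans (ltW ed) _.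
  by rewrite ge_min lexx orbT.
- move=> i; have := eball_coord _ _ _ Hp i; rewrite !mxE !subr0 => hp.
  apply: le_trans (ler_normD _ _) _; apply: lerD => //.
  exact: le_trans (coord_le_enorm x1 i) (le_trans h1 e1).
Qed.

Lemma trT_hull (T : Pt) z : hull T (patch_tr T z).
Proof.
move=> e e0; exists z.
set e' := Num.min (e / 2) (2^-1).
have e'0 : 0 < e'.
  by rewrite lt_min; apply/andP; split; [exact: divr_gt0 | rewrite invr_gt0].
have h : rho (patch_tr T z) (patch_tr T z) <= e'.
  apply: (rho_le _ _ e' 0 0) => //; rewrite ?enorm0 ?(ltW e'0) //.
  by rewrite ge_min lexx orbT.
apply: le_lt_trans h _.
by rewrite gt_min ltr_pdivrMr // ltr_pMr // ltr1n.
Qed.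

End Hull.
Section Diam.
Context {R : realType} {d : nat} {L : finType}.
Local Notation V := 'rV[R]_d.
Local Notation Tl := (@Tile R d L).
Local Notation Pt := (@Patch R d L).

Lemma subrBB (a b c : R) : (a - c) - (b - c) = a - b.
Proof. by rewrite opprB addrA subrK. Qed.

Lemma addrBB (a b c : R) : (a + c) - (b + c) = a - b.
Proof. by rewrite opprD addrACA subrr addr0. Qed.

Lemma diam_bound (T : Pt) : is_patch T -> FLC T ->
  exists D : R, 0 <= D /\ forall t, T t -> forall p q, supp t p -> supp t q ->
    forall i, `|p ord0 i - q ord0 i| <= D.
Proof.
move=> pT hF.
have K1 : compact [set (0 : V)] by exact: compact_set1.
have [n [Ps HPs]] := hF _ K1.
have HM : forall i : 'I_n, exists M : R, 0 <= M /\ forall s x y,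
    Ps i = [set s] -> meet_patch T (set_tr [set 0] x) = patch_tr (Ps i) y ->
    forall p q, supp s p -> supp s q -> forall j, `|p ord0 j - q ord0 j| <= M.
  move=> i.
  case: (pselect (exists s x y, Ps i = [set s] /\
      meet_patch T (set_tr [set 0] x) = patch_tr (Ps i) y)); last first.
    move=> N; exists 0; split=> // s x y Es Ex; exfalso; apply: N.
    by exists s, x, y.
  case=> s [x [y [Es Ex]]].
  have Tsy : T (tile_tr s y).
    have : patch_tr (Ps i) y (tile_tr s y) by exists s => //; rewrite Es.
    by rewrite -Ex => -[].
  have [M [M0 HMc]] := compact_coord _ (pT.1 _ Tsy).1.
  exists (M + M); split; first by rewrite addr_ge0.
  move=> s' x' y' Es' _ p q sp sq j.
  have ss' : s' = s by have : [set s] s' by rewrite -Es Es'.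
  subst s'.
  have hp : supp (tile_tr s y) (p + y) by rewrite supp_tr set_trE addrK.
  have hq : supp (tile_tr s y) (q + y) by rewrite supp_tr set_trE addrK.
  have := HMc _ hp j; have := HMc _ hq j; rewrite !mxE => h2 h1.
  rewrite -(addrBB _ _ (y ord0 j)).
  by apply: le_trans (ler_normB _ _) (lerD h1 h2).
have [M HM'] := choice HM.
exists (\sum_i M i); split; first by apply: sumr_ge0 => i _; case: (HM' i).
move=> t Tt p q tp tq j.
have [c ic] := @tile_int _ _ _ t p (pT.1 _ Tt) tp.
have [i [y Ey]] := HPs c.
have Mc : meet_patch T (set_tr [set 0] c) = [set t].
  apply/seteqP; split=> t'.
    case=> Tt' [c' [t'c' /set_trE /= /eqP]]; rewrite subr_eq0 => /eqP cc'.
    subst c'; apply: contrapT => ne.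
    have := pT.2 _ _ Tt Tt' (nesym ne); rewrite -subset0 => H0.
    have ct' : closure (interior (supp t')) c by case: (pT.1 _ Tt') => _ ->.
    have [w [w1 w2]] := int_meet _ _ _ ct' ic.
    by apply: (H0 w).
  move=> /= ->; split=> //; exists c; split.
    exact: nbhs_singleton ic.
  by apply/set_trE; rewrite subrr.
have Es : Ps i = [set tile_tr t (- y)].
  apply/seteqP; split=> s.
    move=> Pis; have : patch_tr (Ps i) y (tile_tr s y) by exists s.
    by rewrite -Ey Mc /= => <-; rewrite tile_trD subrr tile_tr0.
  move=> /= ->; have : patch_tr (Ps i) y t by rewrite -Ey Mc.
  by move/patch_trE.
have := (HM' i).2 _ c y Es Ey (p - y) (q - y).
rewrite !supp_tr !set_trE !opprK !subrK => /(_ tp tq j).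
rewrite !mxE subrBB => h; apply: le_trans h _.
rewrite (bigD1 i) //= lerDl; apply: sumr_ge0 => k _; by case: (HM' k).
Qed.

Lemma diam_tr (T : Pt) (D : R) z t :
  (forall t, T t -> forall p q, supp t p -> supp t q ->
    forall i, `|p ord0 i - q ord0 i| <= D) ->
  patch_tr T z t -> forall p q, supp t p -> supp t q ->
    forall i, `|p ord0 i - q ord0 i| <= D.
Proof.
move=> HD /patch_trP [s Ts ->] p q; rewrite !supp_tr !set_trE => hp hq i.
by have := HD _ Ts _ _ hp hq i; rewrite !mxE subrBB.
Qed.

End Diam.
Section Helpers2.
Context {R : realType} {d : nat} {L : finType}.
Local Notation V := 'rV[R]_d.
Local Notation Tl := (@Tile R d L).
Local Notation Pt := (@Patch R d L).

Lemma FLC_tr (T : Pt) (K : set V) n (Ps : 'I_n -> Pt) :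
  (forall x, exists i y, meet_patch T (set_tr K x) = patch_tr (Ps i) y) ->
  forall z, exists i w, meet_patch (patch_tr T z) K = patch_tr (Ps i) w.
Proof.
move=> H z; have [i [y E]] := H (- z); exists i, (y + z).
by rewrite meet_tr E patch_trD.
Qed.

Lemma eball_tr (x : V) r z : set_tr (eball x r) z = eball (x + z) r.
Proof.
have E : forall p : V, p - (x + z) = p - z - x.
  by move=> p; rewrite opprD addrA addrAC.
by apply/seteqP; split=> p; rewrite set_trE /eball /= E.
Qed.

Lemma mxMn (w : V) m i : (w *+ m) ord0 i = w ord0 i *+ m.
Proof.
elim: m => [|m IH]; first by rewrite !mulr0n mxE.
by rewrite !mulrS mxE IH.
Qed.

Lemma tr_fix (A : set V) (M : R) a b :
  (forall p, A p -> forall i, `|p ord0 i| <= M) -> A !=set0 ->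
  set_tr A a = set_tr A b -> a = b.
Proof.
move=> HM [p Ap] E.
set w := b - a.
have step : forall q, A q -> A (q + w).
  move=> q Aq; have : set_tr A b (q + b) by apply/set_trE; rewrite addrK.
  by rewrite -E set_trE /w addrA.
have iter : forall m : nat, A (p + w *+ m).
  elim=> [|m IH]; first by rewrite mulr0n addr0.
  by rewrite mulrSr addrA; apply: step.
suff : w = 0 by move/eqP; rewrite subr_eq0 => /eqP.
apply/matrixP => i0 i.
rewrite (ord1 i0) [RHS]mxE; apply: contrapT => ne.
have wi : 0 < `|w ord0 i| by rewrite normr_gt0; apply/eqP.
have M0 : 0 <= M by apply: le_trans (HM _ Ap i).
set m := Num.Def.archi_bound ((M + M) / `|w ord0 i|).
have hm := @archi_boundP R ((M + M) / `|w ord0 i|) (divr_ge0 (addr_ge0 M0 M0) (ltW wi)).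
have h1 := HM _ (iter m) i; have h2 := HM _ Ap i.
move: h1; rewrite mxE mxMn => h1.
have : `|w ord0 i *+ m| <= M + M.
  have -> : w ord0 i *+ m = (p ord0 i + w ord0 i *+ m) - p ord0 i by rewrite addrC addKr.
  by apply: le_trans (ler_normB _ _) (lerD h1 h2).
rewrite normrMn -mulr_natr => h3.
move: hm; rewrite ltr_pdivrMr // => h4.
by have := le_lt_trans h3 h4; rewrite mulrC ltxx.
Qed.

Lemma meetP (P : Pt) B t : meet_patch P B t -> P t.
Proof. by case. Qed.

End Helpers2.
Section Ultra.

Lemma exists_ultra : exists U : set_system nat, UltraFilter U /\ (\oo `<=` U).
Proof. exact: ultraFilterLemma. Qed.

Context (U : set_system nat) (UU : UltraFilter U) (Uoo : \oo `<=` U).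

Lemma U_large (A : set nat) : U A -> forall N, exists n, (N <= n)%N /\ A n.
Proof.
move=> UA N; have UN : U [set n | (N <= n)%N] by apply: Uoo; exists N.
by have [n [Nn An]] := filter_ex (filterI UN UA); exists n.
Qed.

Lemma U_fin (I : finType) (g : nat -> I) (B : set nat) : U B ->
  exists i, U (B `&` [set n | g n = i]).
Proof.
move=> UB; apply: contrapT => H.
have H' : forall i, U (~` [set n | g n = i]).
  move=> i; case: (in_ultra_setVsetC [set n | g n = i] UU) => // Ui.
  by exfalso; apply: H; exists i; apply: filterI.
have HF : \forall n \near U, forall i, (~` [set n | g n = i]) n.
  exact: filter_forall.
have [n [_ Hn]] := filter_ex (filterI UB HF).
exact: (Hn (g n)).
Qed.

Lemma U_lim_real {R : realType} (s : nat -> R) (M : R) :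
  U [set n | `|s n| <= M] ->
  exists v : R, forall e : R, 0 < e -> U [set n | `|s n - v| < e].
Proof.
move=> UM.
have FA : (s @ U) `[- M, M]%classic.
  change (U (s @^-1` `[- M, M]%classic)).
  by apply: filterS UM => n /=; rewrite in_itv /= -ler_norml.
have [v [_ clv]] := @segment_compact R (- M) M (s @ U) _ FA.
exists v => e e0; case: (in_ultra_setVsetC [set n | `|s n - v| < e] UU) => // Uc.
exfalso.
have F1 : (s @ U) (~` [set y | `|y - v| < e]) by [].
have N1 : nbhs v [set y | `|y - v| < e].
  by apply/nbhs_ballP; exists e => // y; rewrite /ball /= distrC.
by have [y [/= ]] := clv _ _ F1 N1.
Qed.

Lemma U_lim_vec {R : realType} {d : nat} (s : nat -> 'rV[R]_d) (M : R) :
  U [set n | forall i, `|s n ord0 i| <= M] ->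
  exists v : 'rV[R]_d, forall e : R, 0 < e ->
    U [set n | forall i, `|s n ord0 i - v ord0 i| < e].
Proof.
move=> UM.
have H : forall i : 'I_d, exists vi : R,
    forall e : R, 0 < e -> U [set n | `|s n ord0 i - vi| < e].
  move=> i; apply: (@U_lim_real R _ M).
  by apply: filterS UM => n /=; apply.
have [g Hg] := choice H.
exists (\row_i g i) => e e0.
have HF : \forall n \near U, forall i, [set n | `|s n ord0 i - g i| < e] n.
  by apply: filter_forall => i; apply: Hg.
by apply: filterS HF => n /= Hn i; rewrite mxE; exact: Hn.
Qed.

End Ultra.
Section PerK.
Context {R : realType} {d : nat} {L : finType}.
Local Notation V := 'rV[R]_d.
Local Notation Tl := (@Tile R d L).
Local Notation Pt := (@Patch R d L).

Context (T : Pt) (pT : is_patch T) (hF : FLC T) (z : nat -> V)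
  (U : set_system nat) (UU : UltraFilter U) (Uoo : \oo `<=` U).
Context (tau0 : Tl) (c0 : V) (rho0 M0 Mu : R) (rho0pos : 0 < rho0)
  (Int0 : forall w : V, (forall i, `|w ord0 i| < rho0) -> interior (supp tau0) (c0 + w))
  (Bnd0 : forall p, supp tau0 p -> forall i, `|p ord0 i| <= M0)
  (u : nat -> V) (A1 : set nat) (UA1 : U A1)
  (Anch : forall n, A1 n ->
     meet_patch (patch_tr T (z n)) (cube 1) (tile_tr tau0 (u n)) /\
     forall i, `|u n ord0 i| <= Mu).

Lemma cube_mono (a b : R) : a <= b -> cube a `<=` (cube b : set V).
Proof. by move=> ab p H i; apply: le_trans (H i) ab. Qed.

Lemma vec_alg (un wn um wm : V) :
  un + ((wn - un) - (wm - um)) - wn = um - wm.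
Proof.
by apply/matrixP => i j; rewrite !mxE; ring.
Qed.

Lemma per_k (k : nat) : exists Q : Pt,
  U [set n | patch_tr (meet_patch (patch_tr T (z n)) (cube (k%:R + 1))) (- u n) = Q].
Proof.
have [nk [Psk HPk]] := hF _ (cube_compact (k%:R + 1)).
have H1 : forall n, exists iw : 'I_nk * V,
    meet_patch (patch_tr T (z n)) (cube (k%:R + 1)) = patch_tr (Psk iw.1) iw.2.
  by move=> n; have [i [w E]] := FLC_tr _ _ _ _ HPk (z n); exists (i, w).
have [IW HIW] := choice H1.
have [j Uj] := U_fin _ UU _ (fun n => (IW n).1) _ UA1.
set Bk := A1 `&` [set n | (IW n).1 = j] in Uj.
have c1k : cube 1 `<=` (cube (k%:R + 1) : set V).
  by apply: cube_mono; rewrite lerDr.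
have Hmem : forall n, Bk n -> Psk j (tile_tr tau0 (u n - (IW n).2)).
  move=> n [A1n /= Ij]; have [[h1 h1'] _] := Anch n A1n.
  have h2 : meet_patch (patch_tr T (z n)) (cube (k%:R + 1)) (tile_tr tau0 (u n)).
    by split=> //; case: h1' => p [p1 p2]; exists p; split=> //; apply: c1k.
  by move: h2; rewrite HIW Ij => /patch_trE; rewrite tile_trD.
have [n1 Bn1] := filter_ex Uj.
set a1 := u n1 - (IW n1).2.
have Ha1 : Psk j (tile_tr tau0 a1) by apply: Hmem.
clearbody a1.
set Kb := k%:R + 1 + M0 + `|a1|.
have Wb : forall n, Bk n -> forall i, `|(IW n).2 ord0 i| <= Kb.
  move=> n Bn i.
  have : patch_tr (Psk j) (IW n).2 (tile_tr (tile_tr tau0 a1) (IW n).2).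
    by exists (tile_tr tau0 a1).
  case: Bn => _ /= Ij; rewrite -Ij -HIW => -[_ [p []]].
  rewrite !supp_tr !set_trE => hp hc.
  have hb := Bnd0 _ hp i; have hci := hc i; have ha := coord_le_norm a1 i.
  move: hb; rewrite !mxE => hb.
  have -> : (IW n).2 ord0 i =
      p ord0 i - (p ord0 i - (IW n).2 ord0 i - a1 ord0 i) - a1 ord0 i by ring.
  apply: le_trans (ler_normB _ _) _; apply: lerD => //.
  by apply: le_trans (ler_normB _ _) _; apply: lerD.
set v := fun n => (IW n).2 - u n.
have Uv : U [set n | forall i, `|v n ord0 i| <= Kb + Mu].
  apply: filterS Uj => n Bn i; rewrite /v !mxE.
  apply: le_trans (ler_normB _ _) _; apply: lerD.
    exact: Wb.
  by case: (Anch n Bn.1).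
have [vinf Hv] := U_lim_vec _ UU _ _ Uv.
have r2 : 0 < rho0 / 2 by rewrite divr_gt0.
have UCk : U (Bk `&` [set n | forall i, `|v n ord0 i - vinf ord0 i| < rho0 / 2]).
  exact: filterI Uj (Hv _ r2).
have same : forall n m,
    (Bk `&` [set n | forall i, `|v n ord0 i - vinf ord0 i| < rho0 / 2]) n ->
    (Bk `&` [set n | forall i, `|v n ord0 i - vinf ord0 i| < rho0 / 2]) m ->
    v n = v m.
  move=> n m [Bn Cn] [Bm Cm].
  set del := v n - v m.
  have dels : forall i, `|del ord0 i| < rho0.
    move=> i.
    have -> : del ord0 i =
      (v n ord0 i - vinf ord0 i) + (vinf ord0 i - v m ord0 i).
      by rewrite /del !mxE; ring.
    apply: le_lt_trans (ler_normD _ _) _.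
    rewrite [X in _ < X](splitr rho0); apply: ltrD; first exact: Cn.
    rewrite distrC.
    exact: Cm.
  have Pa : patch_tr T (z n) (tile_tr tau0 (u n)).
    by have [[]] := Anch n Bn.1.
  have Pb : patch_tr T (z n) (tile_tr tau0 (u n + del)).
    have : patch_tr (Psk j) (IW n).2 (tile_tr tau0 (u n + del)).
      apply/patch_trE; rewrite tile_trD /del /v vec_alg; exact: Hmem.
    by case: Bn => _ /= Ij; rewrite -Ij -HIW => -[].
  have ab := trT_disj _ _ _ _ pT Pa Pb.
  have e : tile_tr tau0 (u n) = tile_tr tau0 (u n + del).
    apply: ab; exists (c0 + del + u n); split.
      by apply/interior_tr; rewrite addrK; apply: Int0.
    apply/interior_tr.
    have -> : c0 + del + u n - (u n + del) = c0 + 0.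
      by apply/matrixP => a b; rewrite !mxE; ring.
    by apply: Int0 => i; rewrite mxE normr0.
  have c0s : supp tau0 c0.
    have h0 : forall i, `|(0 : V) ord0 i| < rho0 by move=> i; rewrite mxE normr0.
    by have := Int0 0 h0; rewrite addr0; apply: nbhs_singleton.
  have := tr_fix _ _ _ _ Bnd0 (ex_intro _ c0 c0s) (congr1 supp e).
  move/eqP; rewrite -subr_eq0 opprD addrA subrr sub0r oppr_eq0 /del subr_eq0.
  by move/eqP.
have [n2 Cn2] := filter_ex UCk.
exists (patch_tr (Psk j) (v n2)).
apply: filterS UCk => n Cn /=.
have := Cn; case=> -[_ /= Ij] _.
by rewrite HIW Ij patch_trD -(same n n2 Cn Cn2).
Qed.

End PerK.
Section Anchor.
Context {R : realType} {d : nat} {L : finType}.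
Local Notation V := 'rV[R]_d.
Local Notation Tl := (@Tile R d L).
Local Notation Pt := (@Patch R d L).

Context (T : Pt) (pT : is_patch T) (sT : patch_supp T = setT) (hF : FLC T)
  (z : nat -> V) (U : set_system nat) (UU : UltraFilter U) (Uoo : \oo `<=` U).

Lemma anchor : exists (tau0 : Tl) (c0 : V) (rho0 M0 Mu : R) (u : nat -> V)
   (A1 : set nat),
  [/\ 0 < rho0,
   (forall w : V, (forall i, `|w ord0 i| < rho0) -> interior (supp tau0) (c0 + w)),
   (forall p, supp tau0 p -> forall i, `|p ord0 i| <= M0), U A1 &
   (forall n, A1 n ->
     meet_patch (patch_tr T (z n)) (cube 1) (tile_tr tau0 (u n)) /\
     forall i, `|u n ord0 i| <= Mu)].
Proof.
have [n1 [Ps1 HP1]] := hF _ (cube_compact 1).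
have H1 : forall n, exists iw : 'I_n1 * V,
    meet_patch (patch_tr T (z n)) (cube 1) = patch_tr (Ps1 iw.1) iw.2.
  by move=> n; have [i [w E]] := FLC_tr _ _ _ _ HP1 (z n); exists (i, w).
have [IW HIW] := choice H1.
have [i1 Ui1] := U_fin _ UU _ (fun n => (IW n).1) _ (@filterT _ U _).
have [n0 [_ In0]] := filter_ex Ui1.
have [t [Tt [q [tq cq]]]] : exists t, T t /\
    supp t `&` set_tr (cube 1) (- z n0) !=set0.
  have cl : closure (\bigcup_(t in T) supp t) (- z n0).
    by have : patch_supp T (- z n0) by rewrite sT.
  have nb : nbhs (- z n0) (set_tr (cube 1) (- z n0)).
    apply/(interior_tr (cube 1) (- z n0) (- z n0)); rewrite subrr.
    apply/nbhsE'; exists 1 => // w Hw i; have := Hw i.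
    by rewrite mxE sub0r normrN => /ltW.
  have [p [[t Tt tp] cp]] := cl _ nb.
  by exists t; split=> //; exists p.
set a := z n0 - (IW n0).2.
have Mt : meet_patch (patch_tr T (z n0)) (cube 1) (tile_tr t (z n0)).
  rewrite meet_tr; apply/patch_trE; rewrite tile_trD subrr tile_tr0.
  by split=> //; exists q.
rewrite HIW In0 in Mt; move/patch_trE: Mt; rewrite tile_trD -/a => Pa.
clearbody a.
have [c ic] := @tile_int _ _ _ t q (pT.1 _ Tt) tq.
have [e e0 He] := interior_cube _ _ ic.
have [Mt [Mt0 HMt]] := compact_coord _ (pT.1 _ Tt).1.
set M0 := Mt + `|a|.
have B0 : forall p, supp (tile_tr t a) p -> forall i, `|p ord0 i| <= M0.
  move=> p; rewrite supp_tr set_trE => hp i.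
  have := HMt _ hp i; rewrite !mxE => h.
  have -> : p ord0 i = (p ord0 i - a ord0 i) + a ord0 i by rewrite subrK.
  apply: le_trans (ler_normD _ _) _; apply: lerD; first exact: h.
  exact: (coord_le_norm a i).
exists (tile_tr t a), (c + a), (e / 2), M0, (1 + M0), (fun n => (IW n).2),
  [set n | (IW n).1 = i1].
split.
- by rewrite divr_gt0.
- move=> w Hw; apply/interior_tr.
  have -> : c + a + w - a = c + w by apply/matrixP => i j; rewrite !mxE; ring.
  apply/nbhsE'; exists (e / 2); first by rewrite divr_gt0.
  move=> p Hp.
  have -> : p = c + (p - c) by rewrite addrC subrK.
  apply: He => i; rewrite !mxE.
  have -> : p ord0 i - c ord0 i =
     - (c ord0 i + w ord0 i - p ord0 i) + w ord0 i by ring.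
  apply: le_lt_trans (ler_normD _ _) _; rewrite normrN.
  rewrite [X in _ < X](splitr e); apply: ltrD; last exact: Hw.
  by have := Hp i; rewrite mxE.
- exact: B0.
- by apply: filterS Ui1 => n [].
move=> n /= In.
have Mn : meet_patch (patch_tr T (z n)) (cube 1) (tile_tr (tile_tr t a) (IW n).2).
  by rewrite HIW In; apply/patch_trE; rewrite tile_trD subrr tile_tr0.
split=> // i.
case: Mn => _ [p []]; rewrite supp_tr set_trE => /B0 hp hc.
move: (hp i) (hc i); rewrite !mxE => {}hp {}hc.
have -> : (IW n).2 ord0 i = p ord0 i - (p ord0 i - (IW n).2 ord0 i) by ring.
by apply: le_trans (ler_normB _ _) _; apply: lerD.
Qed.

End Anchor.
Section Cluster.
Context {R : realType} {d : nat} {L : finType}.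
Local Notation V := 'rV[R]_d.
Local Notation Tl := (@Tile R d L).
Local Notation Pt := (@Patch R d L).

Lemma patch_tr_meet (P : Pt) B z t : patch_tr (meet_patch P B) z t -> patch_tr P z t.
Proof. by move/patch_trE => [Pt _]; apply/patch_trE. Qed.

Lemma cluster_pt (T : Pt) : is_tiling T -> FLC T -> forall z : nat -> V,
  exists S : Pt, forall rr : R, 0 < rr -> forall eta : R, 0 < eta -> forall N : nat,
    exists n, (N <= n)%N /\ exists x2 : V, enorm x2 <= eta /\
      meet_patch S (eball 0 rr) =
      meet_patch (patch_tr (patch_tr T (z n)) x2) (eball 0 rr).
Proof.
move=> [pT sT] hF z.
have [U [UU Uoo]] := exists_ultra.
have [tau0 [c0 [rho0 [M0 [Mu [u [A1 [r0 I0 B0 UA1 An]]]]]]]] :=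
  anchor T pT sT hF z U UU.
have Ub : U [set n | forall i, `|u n ord0 i| <= Mu].
  by apply: filterS UA1 => n /An [].
have [uinf Hu] := U_lim_vec _ UU _ _ Ub.
have HQ : forall k : nat, exists Q : Pt, U [set n |
    patch_tr (meet_patch (patch_tr T (z n)) (cube (k%:R + 1))) (- u n) = Q].
  move=> k; exact: (@per_k R d L T pT hF z U UU tau0 c0 rho0 M0 Mu r0 I0 B0 u A1 UA1 An k).
have [Q HQ'] := choice HQ.
set S' : Pt := [set t | exists k, Q k t].
exists (patch_tr S' uinf).
move=> rr rr0 eta eta0 N.
set k := Num.Def.archi_bound rr.
have hk : rr < k%:R := archi_boundP (ltW rr0).
set e' := Num.min 1 (eta / (d%:R + 1)).
have d1 : 0 < d%:R + 1 :> R by apply: ltr_wpDl (ler0n _ _) ltr01.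
have e'0 : 0 < e'.
  by rewrite lt_min ltr01 /=; apply: divr_gt0.
have sub : forall m, (forall i, `|u m ord0 i - uinf ord0 i| < 1) ->
    eball (- uinf) rr `<=` set_tr (cube (k%:R + 1)) (- u m).
  move=> m Hm p Hp; apply/set_trE; rewrite opprK => i.
  have := eball_coord _ _ _ Hp i; rewrite !mxE opprK => h.
  have -> : p ord0 i + u m ord0 i =
    (p ord0 i + uinf ord0 i) + (u m ord0 i - uinf ord0 i) by ring.
  apply: le_trans (ler_normD _ _) _; apply: lerD; last exact: ltW (Hm i).
  exact: le_trans h (ltW hk).
have UG : U ([set n | patch_tr (meet_patch (patch_tr T (z n)) (cube (k%:R + 1)))
     (- u n) = Q k] `&` [set n | forall i, `|u n ord0 i - uinf ord0 i| < e']).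
  exact: filterI (HQ' k) (Hu _ e'0).
have [n [Nn [Gn1 Gn2]]] := U_large _ UU Uoo _ UG N.
have Gn2' : forall i, `|u n ord0 i - uinf ord0 i| < 1.
  by move=> i; apply: lt_le_trans (Gn2 i) _; rewrite ge_min lexx.
exists n; split=> //; exists (- u n + uinf); split.
  apply: le_trans (_ : d%:R * (eta / (d%:R + 1)) <= eta).
    apply: enorm_le_coord; first by rewrite divr_ge0 // ltW.
    move=> i; rewrite !mxE addrC distrC; apply: ltW.
    by apply: lt_le_trans (Gn2 i) _; rewrite ge_min lexx orbT.
  by rewrite mulrCA ger_pMr // ler_pdivrMr // mul1r lerDl.
have Key : meet_patch (patch_tr (patch_tr T (z n)) (- u n)) (eball (- uinf) rr) =
    meet_patch S' (eball (- uinf) rr).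
  apply/seteqP; split=> t.
    case=> Pt [p [tp Bp]]; split; last by exists p.
    have : meet_patch (patch_tr (patch_tr T (z n)) (- u n))
        (set_tr (cube (k%:R + 1)) (- u n)) t.
      by split=> //; exists p; split=> //; apply: sub.
    by rewrite meet_tr' Gn1 => Qt; exists k.
  case=> -[m Qm] [p [tp Bp]]; split; last by exists p.
  have UG2 : U ([set n | patch_tr (meet_patch (patch_tr T (z n)) (cube (m%:R + 1)))
     (- u n) = Q m] `&` ([set n | patch_tr (meet_patch (patch_tr T (z n))
     (cube (k%:R + 1))) (- u n) = Q k] `&`
     [set n | forall i, `|u n ord0 i - uinf ord0 i| < e'])).
    exact: filterI (HQ' m) UG.
  have [n' [E1 [E2 E3]]] := filter_ex UG2.
  have E3' : forall i, `|u n' ord0 i - uinf ord0 i| < 1.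
    by move=> i; apply: lt_le_trans (E3 i) _; rewrite ge_min lexx.
  have t1 : patch_tr (patch_tr T (z n')) (- u n') t.
    by have := patch_tr_meet (patch_tr T (z n')) (cube (m%:R + 1)) (- u n') t; rewrite E1; apply.
  have : meet_patch (patch_tr (patch_tr T (z n')) (- u n'))
      (set_tr (cube (k%:R + 1)) (- u n')) t.
    by split=> //; exists p; split=> //; apply: sub.
  rewrite meet_tr' E2 -Gn1; exact: patch_tr_meet.
have := meet_tr_eq _ _ uinf _ Key.
rewrite eball_tr addNr !patch_trD => ->.
by [].
Qed.

End Cluster.
Section KeyLemma.
Context {R : realType} {d : nat} {L : finType}.
Local Notation V := 'rV[R]_d.
Local Notation Tl := (@Tile R d L).
Local Notation Pt := (@Patch R d L).

Lemma tri3 (u v w : R[i]) (e1 e2 : R) :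
  `|w - u| < e1%:C -> `|w - v| < e2%:C -> `|u - v| < (e1 + e2)%:C.
Proof.
move=> h1 h2; have -> : u - v = (w - v) - (w - u) by ring.
apply: le_lt_trans (ler_normB _ _) _; rewrite rmorphD addrC; exact: ltrD.
Qed.

Lemma eig_diff (T : Pt) f a z1 z2 (x : V) : is_eigenfunction T f a ->
  `|f (patch_tr T (z1 - x)) - f (patch_tr T (z2 - x))| =
  `|f (patch_tr T z1) - f (patch_tr T z2)|.
Proof.
case=> _ f1 fe.
have E : forall z, f (patch_tr T (z - x)) = expi (dotp x a) * f (patch_tr T z).
  by move=> z; rewrite -fe ?patch_trD //; apply: trT_hull.
have n1 : `|expi (dotp x a)| = 1.
  have := f1 _ (trT_hull T (z1 - x)); rewrite E normrM f1 ?mulr1 //.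
  exact: trT_hull.
by rewrite !E -mulrBr normrM n1 mul1r.
Qed.

Lemma rho_from (T S : Pt) y x2 (e : R) : 0 < e -> e <= 2^-1 -> enorm x2 <= e ->
  meet_patch S (eball 0 e^-1) = meet_patch (patch_tr (patch_tr T y) x2) (eball 0 e^-1) ->
  rho S (patch_tr T y) <= e.
Proof.
move=> e0 e2 hx E; apply: (rho_le _ _ e 0 x2) => //.
  by rewrite enorm0 ltW.
by rewrite patch_tr0.
Qed.

Lemma Kprime (T : Pt) f a : is_tiling T -> FLC T -> is_eigenfunction T f a ->
  forall eps : R, 0 < eps -> exists2 Rr : R, 0 < Rr & forall z1 z2 x : V,
    meet_patch (patch_tr T z1) (eball x Rr) = meet_patch (patch_tr T z2) (eball x Rr) ->
    `|f (patch_tr T z1) - f (patch_tr T z2)| < eps%:C.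
Proof.
move=> hT hF hE eps eps0; have [fc f1 fe] := hE.
apply: contrapT => H.
have H' : forall n : nat, exists zz : V * V * V,
    meet_patch (patch_tr T zz.1.1) (eball zz.2 (n%:R + 1)) =
    meet_patch (patch_tr T zz.1.2) (eball zz.2 (n%:R + 1)) /\
    ~ (`|f (patch_tr T zz.1.1) - f (patch_tr T zz.1.2)| < eps%:C).
  move=> n; apply: contrapT => Hn; apply: H; exists (n%:R + 1).
    by apply: ltr_wpDl (ler0n _ _) ltr01.
  move=> z1 z2 x E; apply: contrapT => ne; apply: Hn; exists (z1, z2, x).
  by split.
have [Z HZ] := choice H'.
set y1 := fun n => (Z n).1.1 - (Z n).2.
set y2 := fun n => (Z n).1.2 - (Z n).2.
have Ey : forall n, meet_patch (patch_tr T (y1 n)) (eball 0 (n%:R + 1)) =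
    meet_patch (patch_tr T (y2 n)) (eball 0 (n%:R + 1)).
  move=> n; have [E _] := HZ n.
  have := meet_tr_eq _ _ (- (Z n).2) _ E.
  by rewrite !patch_trD eball_tr subrr.
have Fy : forall n, ~ (`|f (patch_tr T (y1 n)) - f (patch_tr T (y2 n))| < eps%:C).
  by move=> n; rewrite /y1 /y2 (eig_diff _ _ _ _ _ _ hE); case: (HZ n).
have [S HS] := cluster_pt _ hT hF y1.
have hS : hull T S.
  move=> e e0.
  set e' := Num.min (e / 2) (2^-1).
  have e'0 : 0 < e'.
    by rewrite lt_min; apply/andP; split; [exact: divr_gt0 | rewrite invr_gt0].
  have ie'0 : 0 < e'^-1 by rewrite invr_gt0.
  have [n [_ [x2 [hx E]]]] := HS _ ie'0 _ e'0 0%N.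
  exists (y1 n).
  have e'2 : e' <= 2^-1 by rewrite ge_min lexx orbT.
  apply: le_lt_trans (rho_from _ _ _ _ _ e'0 e'2 hx E) _.
  by rewrite gt_min ltr_pdivrMr // ltr_pMr // ltr1n.
have [del del0 Hdel] := fc S hS (eps / 2) (divr_gt0 eps0 (ltr0Sn _ 1)).
set e' := Num.min (del / 2) (2^-1).
have e'0 : 0 < e'.
  by rewrite lt_min; apply/andP; split; [exact: divr_gt0 | rewrite invr_gt0].
have e'del : e' < del by rewrite gt_min ltr_pdivrMr // ltr_pMr // ltr1n.
have e'2 : e' <= 2^-1 by rewrite ge_min lexx orbT.
set rr := e'^-1.
have rr0 : 0 < rr by rewrite invr_gt0.
set N := Num.Def.archi_bound (d%:R * (rr + 1)).
have hN : d%:R * (rr + 1) < N%:R.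
  by apply: archi_boundP; rewrite mulr_ge0 // addr_ge0 // ltW.
have [n [Nn [x2 [hx E]]]] := HS _ rr0 _ e'0 N.
have x21 : enorm x2 <= 1.
  by apply: le_trans hx (le_trans e'2 _); rewrite invf_le1 // ler1n.
have E2 : meet_patch (patch_tr (patch_tr T (y1 n)) x2) (eball 0 rr) =
    meet_patch (patch_tr (patch_tr T (y2 n)) x2) (eball 0 rr).
  have := meet_tr_eq _ _ x2 _ (Ey n); rewrite eball_tr add0r.
  apply: meet_eq_sub => p Hp.
  apply: (@coord_eball _ _ _ _ _ (rr + 1)); first by rewrite addr_ge0 // ltW.
    apply: le_trans (ltW hN) _.
    by apply: le_trans (_ : n%:R <= _); [rewrite ler_nat | rewrite lerDl].
  move=> i; have := eball_coord _ _ _ Hp i; rewrite mxE subr0 => h.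
  apply: le_trans (ler_normB _ _) _; apply: lerD => //.
  exact: le_trans (coord_le_enorm x2 i) x21.
have h1 := rho_from _ _ _ _ _ e'0 e'2 hx E.
have h2 := rho_from _ _ _ _ _ e'0 e'2 hx (etrans E E2).
have g1 := Hdel _ (trT_hull T (y1 n)) (le_lt_trans h1 e'del).
have g2 := Hdel _ (trT_hull T (y2 n)) (le_lt_trans h2 e'del).
apply: (Fy n); rewrite [X in _ < X%:C](splitr eps).
exact: tri3 g1 g2.
Qed.

End KeyLemma.
Section Transfer.
Context {R : realType} {d : nat} {L : finType}.
Local Notation V := 'rV[R]_d.
Local Notation Tl := (@Tile R d L).
Local Notation Pt := (@Patch R d L).

Lemma local_tile (T : Pt) (D : R) z (x : V) Rk t :
  0 <= D -> 0 <= Rk ->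
  (forall t, T t -> forall p q, supp t p -> supp t q ->
    forall i, `|p ord0 i - q ord0 i| <= D) ->
  patch_tr T z t -> supp t `&` eball x Rk !=set0 ->
  supp t `<=` eball x (d%:R * (Rk + D)).
Proof.
move=> D0 Rk0 HD Pt [p [tp Bp]] q tq.
apply: (@coord_eball _ _ _ _ _ (Rk + D)); first by rewrite addr_ge0.
  by [].
move=> i.
have -> : q ord0 i - x ord0 i = (p ord0 i - x ord0 i) + (q ord0 i - p ord0 i) by ring.
apply: le_trans (ler_normD _ _) _; apply: lerD; first exact: eball_coord.
exact: (diam_tr _ _ _ _ HD Pt).
Qed.

Lemma transfer (T : Pt) f a : is_tiling T -> FLC T -> is_eigenfunction T f a ->
  forall eps : R, 0 < eps -> exists2 r0 : R, 0 < r0 &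
  forall (S1 S2 : Pt) (x : V) (r : R), r0 <= r -> hull T S1 -> hull T S2 ->
  (forall (A B : Pt), (A = S1 /\ B = S2) \/ (A = S2 /\ B = S1) ->
    forall (rr : R) z1 z2, eball x r `<=` eball 0 rr ->
    meet_patch A (eball 0 rr) = meet_patch (patch_tr T z1) (eball 0 rr) ->
    meet_patch B (eball 0 rr) = meet_patch (patch_tr T z2) (eball 0 rr) ->
    forall t, patch_tr T z1 t -> supp t `<=` eball x r -> supp t !=set0 ->
    patch_tr T z2 t) ->
  `|f S1 - f S2| < eps%:C.
Proof.
move=> hT hF hE eps eps0.
have e3 : 0 < eps / 3 by rewrite divr_gt0.
have [Rk Rk0 HK] := Kprime _ _ _ hT hF hE _ e3.
have [D [D0 HD]] := diam_bound _ hT.1 hF.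
set r0 := d%:R * (Rk + D) + 1.
have r00 : 0 < r0 by rewrite ltr_wpDl // mulr_ge0 // addr_ge0 // ltW.
exists r0 => // S1 S2 x r r0r h1 h2 Psi.
have [fc _ _] := hE.
have [del1 del10 Hd1] := fc S1 h1 _ e3.
have [del2 del20 Hd2] := fc S2 h2 _ e3.
set X := (d%:R + 1) * (enorm x + r + 1).
have X0 : 0 < X.
  apply: mulr_gt0; first exact: ltr_wpDl (ler0n _ _) ltr01.
  apply: ltr_wpDl; last exact: ltr01.
  by rewrite addr_ge0 ?enorm_ge0 // (le_trans (ltW r00) r0r).
set e := Num.min (Num.min (del1 / 2) (del2 / 2)) (Num.min (2^-1) X^-1).
have e0 : 0 < e.
  rewrite !lt_min !divr_gt0 //= !invr_gt0 X0 andbT //.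
have e2 : e <= 2^-1 by rewrite !ge_min lexx !orbT.
have ed1 : e < del1.
  apply: le_lt_trans (_ : del1 / 2 < del1); first by rewrite !ge_min lexx.
  by rewrite ltr_pdivrMr // ltr_pMr // ltr1n.
have ed2 : e < del2.
  apply: le_lt_trans (_ : del2 / 2 < del2); first by rewrite !ge_min lexx !orbT.
  by rewrite ltr_pdivrMr // ltr_pMr // ltr1n.
have eX : e <= X^-1 by rewrite !ge_min lexx !orbT.
have Xe := inv_le_of _ _ e0 X0 eX.
have ie0 : 0 < e^-1 by rewrite invr_gt0.
have [z1 E1] := hull_approx _ _ h1 _ ie0.
have [z2 E2] := hull_approx _ _ h2 _ ie0.
have g1 : `|f S1 - f (patch_tr T z1)| < (eps / 3)%:C.
  apply: Hd1; first exact: trT_hull.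
  apply: le_lt_trans ed1; apply: (rho_from _ _ _ 0) => //.
    by rewrite enorm0 ltW.
  by rewrite patch_tr0.
have g2 : `|f S2 - f (patch_tr T z2)| < (eps / 3)%:C.
  apply: Hd2; first exact: trT_hull.
  apply: le_lt_trans ed2; apply: (rho_from _ _ _ 0) => //.
    by rewrite enorm0 ltW.
  by rewrite patch_tr0.
have sub : eball x r `<=` eball 0 e^-1.
  move=> p Hp; apply: (@coord_eball _ _ _ _ _ (r + enorm x)).
  - by rewrite addr_ge0 ?enorm_ge0 // (le_trans (ltW r00) r0r).
  - apply: le_trans Xe; rewrite /X ler_pM //.
    + by rewrite addr_ge0 ?enorm_ge0 // (le_trans (ltW r00) r0r).
    + by rewrite lerDl.
    + by rewrite addrC lerDl.
  - move=> i; rewrite mxE subr0.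
    have -> : p ord0 i = (p ord0 i - x ord0 i) + x ord0 i by rewrite subrK.
    apply: le_trans (ler_normD _ _) _; apply: lerD; first exact: eball_coord.
    exact: coord_le_enorm.
have loc : forall z t, patch_tr T z t -> supp t `&` eball x Rk !=set0 ->
    supp t `<=` eball x r.
  move=> z t Pt ne q tq; have := local_tile _ _ _ _ _ _ D0 (ltW Rk0) HD Pt ne _ tq.
  rewrite /eball /= => h; apply: le_trans h _.
  by apply: le_trans r0r; rewrite lerDl.
have Meq : meet_patch (patch_tr T z1) (eball x Rk) =
    meet_patch (patch_tr T z2) (eball x Rk).
  apply/seteqP; split=> t [Pt ne]; split=> //.
    apply: (Psi S1 S2 (or_introl (conj erefl erefl)) _ z1 z2 sub E1 E2) => //.
      exact: loc Pt ne.
    by case: ne => p [tp _]; exists p.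
  apply: (Psi S2 S1 (or_intror (conj erefl erefl)) _ z2 z1 sub E2 E1) => //.
    exact: loc Pt ne.
  by case: ne => p [tp _]; exists p.
have g3 := HK _ _ _ Meq.
have -> : f S1 - f S2 =
  (f S1 - f (patch_tr T z1)) + (f (patch_tr T z1) - f (patch_tr T z2))
  - (f S2 - f (patch_tr T z2)) by ring.
apply: le_lt_trans (ler_normB _ _) _.
apply: le_lt_trans (lerD (ler_normD _ _) (lexx _)) _.
have -> : eps = eps / 3 + eps / 3 + eps / 3.
  by field.
rewrite !rmorphD; apply: ltrD => //; exact: ltrD.
Qed.

End Transfer.
Theorem lemma3p4 (R : realType) (d : nat) (L : finType)
    (T : @Patch R d L) (f : @Patch R d L -> R[i]) (a : 'rV[R]_d) :
  is_tiling T -> FLC T -> is_eigenfunction T f a ->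
  (forall eps : R, 0 < eps ->
     exists2 r : R, 0 < r &
       forall (S1 S2 : @Patch R d L) (x : 'rV[R]_d),
         hull T S1 -> hull T S2 ->
         inside_patch S1 (eball x r) = inside_patch S2 (eball x r) ->
         `|f S1 - f S2| < eps%:C)
  /\
  (forall eps : R, 0 < eps ->
     exists2 r0 : R, 0 < r0 &
       forall (r : R) (P : @Patch R d L), r0 <= r -> is_patch P ->
         (exists x : 'rV[R]_d, eball x r `<=` patch_supp P) ->
         (* diam f(A_P) < eps *)
         exists2 del : R, del < eps &
           forall S1 S2, A_patch T P S1 -> A_patch T P S2 ->
             `|f S1 - f S2| <= del%:C).
Proof.
move=> hT hF hE; split.
  move=> eps eps0; have [r0 r00 H] := transfer _ _ _ hT hF hE _ eps0.
  exists r0 => // S1 S2 x h1 h2 Ein.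
  apply: (H S1 S2 x r0 (lexx _) h1 h2) => A B AB rr z1 z2 sub EA EB t Pt ts [p tp].
  have EAB : inside_patch A (eball x r0) = inside_patch B (eball x r0).
    by case: AB => -[eA eB]; rewrite eA eB.
  have tA : A t.
    have : meet_patch (patch_tr T z1) (eball 0 rr) t.
      by split=> //; exists p; split=> //; apply: sub; apply: ts.
    by rewrite -EA => -[].
  have : inside_patch A (eball x r0) t by split.
  rewrite EAB => -[tB _].
  have : meet_patch B (eball 0 rr) t.
    by split=> //; exists p; split=> //; apply: sub; apply: ts.
  by rewrite EB => -[].
move=> eps eps0.
have e23 : 0 < eps * 2 / 3 by rewrite divr_gt0 // mulr_gt0.
have [r0 r00 H] := transfer _ _ _ hT hF hE _ e23.
exists r0 => // r P r0r pP [x Hx].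
exists (eps * 2 / 3).
  by rewrite ltr_pdivrMr // ltr_pM2l // ltr_nat.
move=> S1 S2 [h1 P1] [h2 P2]; apply: ltW.
apply: (H S1 S2 x r r0r h1 h2) => A B AB rr z1 z2 sub EA EB t Pt ts [p tp].
have PA : P `<=` A by case: AB => -[eA eB]; rewrite eA.
have PB : P `<=` B by case: AB => -[eA eB]; rewrite eB.
have tA : A t.
  have : meet_patch (patch_tr T z1) (eball 0 rr) t.
    by split=> //; exists p; split=> //; apply: sub; apply: ts.
  by rewrite -EA => -[].
have [c ic] := trT_int _ _ _ _ hT.1 Pt tp.
have cP : patch_supp P c by apply: Hx; apply: ts; exact: nbhs_singleton ic.
have nb : nbhs c (interior (supp t)).
  have : open (interior (supp t)) by exact: open_interior.
  by rewrite openE => /(_ c ic).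
have [q [[t' Pt' t'q] iq]] := cP _ nb.
have cl' : closure (interior (supp t')) q by case: (pP.1 _ Pt') => _ ->.
have [w [w1 w2]] := int_meet _ _ _ cl' iq.
have Tt' : patch_tr T z1 t'.
  have : meet_patch A (eball 0 rr) t'.
    split; first exact: PA.
    exists w; split; first exact: nbhs_singleton w1.
    by apply: sub; apply: ts; exact: nbhs_singleton w2.
  by rewrite EA => -[].
have tt' : t = t'.
  by apply: (trT_disj _ _ _ _ hT.1 Pt Tt'); exists w.
have tB : B t by rewrite tt'; apply: PB.
have : meet_patch B (eball 0 rr) t.
  by split=> //; exists p; split=> //; apply: sub; apply: ts.
by rewrite EB => -[].
Qed.
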